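(* Let $G$ be a complete $k$-edge-colored graph with vertex set $V$. Suppose that for each strong module $M$ of $G$ there is a labeling $\ell^M$ such that $(G[M]/\mathbb{P}_{\max}(M),\ell^M)$ is a complete edge-colored permutation graph. Then, for all $i\in\{1,\dots,k\}$, the binary relation $\sqsubset_i$ defined on the labeling $\ell_{\prec}$ of $G$ (as described in the context) is a strict total order on $V$.
   Context: A complete $k$-edge-colored graph $G=(V,E_1,\dots,E_k)$ is a complete graph whose edges are colored surjectively by colors $\{1,\dots,k\}$, $E_i$ being the edges of color $i$. A labeling of a graph on vertex set $V$ is a bijection $V\to\{1,\dots,|V|\}$. A module of $G$ is a set $M\subseteq V$ such that for every $u\in M$ and $v\in V\setminus M$, if $\{u,v\}$ has color $i$ then $\{w,v\}$ has color $i$ for all $w\in M$; a module $M$ is strong if every other module $M'$ satisfies $M\subseteq M'$, $M'\subseteq M$ or $M\cap M'=\emptyset$. The strong modules form a hierarchy with inclusion tree $T_G$ (root $V$, leaves the singletons); $\mathbb{P}_{\max}(M)$ denotes the set of children of a strong module $M$ in $T_G$ (a partition of $M$). The quotient graph $G[M]/\mathbb{P}_{\max}(M)$ has vertex set $\mathbb{P}_{\max}(M)$, and an edge $\{M_a,M_b\}$ gets the (well-defined, common) color of the edges between $M_a$ and $M_b$ in $G$. A complete $k$-edge-colored graph $G$ together with a labeling $\ell$ is a complete edge-colored permutation graph if there are permutations $\pi_1,\dots,\pi_k$ of $\{1,\dots,|V|\}$ such that for all $i$ and all $u,v$: $\{u,v\}\in E_i$ iff $\ell(u)>\ell(v)$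 and $\pi_i^{-1}(\ell(u))<\pi_i^{-1}(\ell(v))$. For distinct $u,v\in V$, let $M^{u,v}$ be the inclusion-minimal strong module containing $u$ and $v$, and let $M^{u,v}_u, M^{u,v}_v\in\mathbb{P}_{\max}(M^{u,v})$ be the distinct children containing $u$ and $v$, respectively. Define the relation $\prec$ on $V$ by $u\prec v$ iff $\ell^{M^{u,v}}(M^{u,v}_u)<\ell^{M^{u,v}}(M^{u,v}_v)$; this is a strict total order, and $\ell_{\prec}\colon V\to\{1,\dots,|V|\}$ is the labeling with $\ell_{\prec}(u)<\ell_{\prec}(v)$ iff $u\prec v$. For a labeling $\ell$ of $G$ (here $\ell=\ell_{\prec}$) and $i\in\{1,\dots,k\}$, the relation $\sqsubset_i$ on $V$ is defined, for all distinct $u,v\in V$ with $\ell(u)>\ell(v)$, by: $u\sqsubset_i v$ if the edge $\{M^{u,v}_u,M^{u,v}_v\}$ has color $i$ in $G[M^{u,v}]/\mathbb{P}_{\max}(M^{u,v})$, and $v\sqsubset_i u$ otherwise. A strict total order is a trichotomous and transitive relation. *)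

(* Defs.v *)
From mathcomp Require Import all_boot.
Set Implicit Arguments. Unset Strict Implicit. Unset Printing Implicit Defensive.

(* A complete k-edge-colored graph on the finite vertex type V is given by
   a coloring col : V -> V -> nat; for distinct u v, col u v in {1..k} is
   the color of the edge {u,v}. *)
Section Defs.
Variables (V : finType) (col : V -> V -> nat).

Definition complete_colored (k : nat) : Prop :=
  (forall u v, u != v -> col u v = col v u) /\
  (forall u v, u != v -> 1 <= col u v <= k) /\
  (forall i, 1 <= i <= k -> exists u v, u != v /\ col u v = i).

Definition is_module (M : {set V}) : bool :=
  (M != set0) &&
  [forall u in M, forall v in ~: M, forall w in M, col w v == col u v].

Definition is_strong (M : {set V}) : bool :=
  is_module M &&
  [forall M' : {set V}, is_module M' ==>
     [|| M \subset M', M' \subset M | [disjoint M & M']]].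

Definition Pmax (M : {set V}) : {set {set V}} :=
  [set A : {set V} | [&& is_strong A, A \proper M &
     [forall B : {set V}, (is_strong B && (A \proper B)) ==> ~~ (B \proper M)]]].

Definition qcol (A B : {set V}) (i : nat) : Prop :=
  forall a b, a \in A -> b \in B -> col a b = i.

Definition perm1 (n : nat) (f : nat -> nat) : Prop :=
  (forall p, 1 <= p <= n -> 1 <= f p <= n) /\
  (forall p q, 1 <= p <= n -> 1 <= q <= n -> f p = f q -> p = q).

Definition quot_labeling (M : {set V}) (lab : {set V} -> nat) : Prop :=
  {in Pmax M &, injective lab} /\
  (forall A, A \in Pmax M -> 1 <= lab A <= #|Pmax M|).

Definition quot_perm_graph (k : nat) (M : {set V}) (lab : {set V} -> nat) : Prop :=
  quot_labeling M lab /\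
  exists pi : nat -> nat -> nat,
    forall i, 1 <= i <= k ->
      perm1 #|Pmax M| (pi i) /\
      forall A B, A \in Pmax M -> B \in Pmax M -> lab B < lab A ->
        (qcol A B i <->
         (* pi_i^{-1}(lab A) < pi_i^{-1}(lab B) *)
         exists p q, [/\ 1 <= p <= #|Pmax M|, 1 <= q <= #|Pmax M|,
                        pi i p = lab A, pi i q = lab B & p < q]).

Definition min_strong (u v : V) (M : {set V}) : Prop :=
  [/\ is_strong M, u \in M, v \in M &
      forall M', is_strong M' -> u \in M' -> v \in M' -> M' \subset M -> M' = M].

Definition prec (l : {set V} -> {set V} -> nat) (u v : V) : Prop :=
  exists M Mu Mv, [/\ min_strong u v M, Mu \in Pmax M, Mv \in Pmax M,
                      [/\ u \in Mu, v \in Mv & Mu != Mv] & l M Mu < l M Mv].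

Definition pair_qcol (u v : V) (i : nat) : Prop :=
  exists M Mu Mv, [/\ min_strong u v M, Mu \in Pmax M, Mv \in Pmax M,
                      [/\ u \in Mu, v \in Mv & Mu != Mv] & qcol Mu Mv i].

(* u ⊏_i v w.r.t. the labeling ℓ_≺ (ℓ_≺(x) < ℓ_≺(y) iff x ≺ y):
   for distinct u,v with ℓ_≺(u) > ℓ_≺(v) (i.e. v ≺ u): u ⊏_i v if the
   quotient edge has color i, and v ⊏_i u otherwise. *)
Definition sqsub (l : {set V} -> {set V} -> nat) (i : nat) (x y : V) : Prop :=
  x != y /\
  ((prec l y x /\ pair_qcol x y i) \/ (prec l x y /\ ~ pair_qcol y x i)).

Definition strict_total_order (R : V -> V -> Prop) : Prop :=
  (forall x y, [\/ R x y, x = y | R y x]) /\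
  (forall x, ~ R x x) /\
  (forall x y, R x y -> ~ R y x) /\
  (forall x y z, R x y -> R y z -> R x z).

End Defs.

(* Main.v *)
Require Import Defs.
From mathcomp Require Import all_boot.
From mathcomp Require Import zify.
From Stdlib Require Import Classical.
Set Implicit Arguments. Unset Strict Implicit. Unset Printing Implicit Defensive.

Lemma perm_surj n f a : perm1 n f -> 1 <= a <= n -> exists2 p, 1 <= p <= n & f p = a.
Proof.
case=> frng finj ha.
have mi : forall x, (x \in iota 1 n) = (1 <= x <= n).
  by move=> x; rewrite mem_iota; lia.
have U : uniq (map f (iota 1 n)).
  rewrite map_inj_in_uniq ?iota_uniq // => x y; rewrite !mi => hx hy; exact: finj.
have S : {subset map f (iota 1 n) <= iota 1 n}.
  by move=> x /mapP[p]; rewrite mi => hp ->; rewrite mi; apply: frng.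
have [_ E] := uniq_min_size U S (ltac:(by rewrite size_map)).
have : a \in map f (iota 1 n) by rewrite E mi.
by case/mapP => p; rewrite mi => hp ->; exists p.
Qed.

Section S.
Variables (V : finType) (col : V -> V -> nat).

Lemma strong_lam A B x : is_strong col A -> is_strong col B -> x \in A -> x \in B ->
  (A \subset B) \/ (B \subset A).
Proof.
move=> /andP[_ /forallP HA] /andP[mB _] xA xB.
have := HA B; rewrite mB /= => /or3P[h|h|h]; [by left|by right|].
move: h; rewrite -setI_eq0 => /eqP h.
have : x \in A :&: B by rewrite inE xA xB.
by rewrite h inE.
Qed.

Lemma set1_strong x : is_strong col [set x].
Proof.
apply/andP; split.
  apply/andP; split; first by apply/set0Pn; exists x; rewrite inE.
  apply/forall_inP => u /set1P ->; apply/forall_inP => v _; apply/forall_inP => w /set1P -> //.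
apply/forallP => M'; apply/implyP => _.
case: (boolP (x \in M')) => h.
  by rewrite sub1set h.
by rewrite disjoints1 h !orbT.
Qed.

Lemma setT_strong (x : V) : is_strong col [set: V].
Proof.
apply/andP; split.
  apply/andP; split; first by apply/set0Pn; exists x; rewrite inE.
  by apply/forall_inP => u _; apply/forall_inP => v; rewrite !inE.
by apply/forallP => M'; apply/implyP => _; rewrite subsetT orbT.
Qed.

Lemma min_strong_ex x y : exists M, min_strong col x y M.
Proof.
pose P := fun M : {set V} => [&& is_strong col M, x \in M & y \in M].
have PT : P setT by rewrite /P (setT_strong x) !inE.
case: (arg_minnP (fun M : {set V} => #|M|) PT) => M /and3P[sM xM yM] Hmin.
exists M; split => // M' sM' xM' yM' sub.
apply/eqP; rewrite eqEcard sub /=; apply: Hmin; by rewrite /P sM' xM' yM'.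
Qed.

Lemma min_strong_uniq x y M M' : min_strong col x y M -> min_strong col x y M' -> M = M'.
Proof.
case=> sM xM yM mM [sM' xM' yM' mM'].
case: (strong_lam sM sM' xM xM') => h.
  by apply: mM'.
by symmetry; apply: mM.
Qed.

Lemma PmaxP M C : C \in Pmax col M -> [/\ is_strong col C, C \proper M &
   forall B, is_strong col B -> C \proper B -> ~~ (B \proper M)].
Proof.
rewrite inE => /and3P[sC pC /forallP H]; split => // B sB pB.
by have := H B; rewrite sB pB /=.
Qed.

Lemma child_sub M C S x : C \in Pmax col M -> is_strong col S -> S \proper M ->
  x \in S -> x \in C -> S \subset C.
Proof.
case/PmaxP => sC pCM Hmax sS pSM xS xC.
case: (strong_lam sS sC xS xC) => // CS.
case: (eqVneq C S) => [->|ne]; first by [].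
have pCS : C \proper S by rewrite properEneq ne CS.
by have := Hmax S sS pCS; rewrite pSM.
Qed.

Lemma child_uniq M C D x : C \in Pmax col M -> D \in Pmax col M -> x \in C -> x \in D -> C = D.
Proof.
move=> PC PD xC xD.
have [sC pC _] := PmaxP PC; have [sD pD _] := PmaxP PD.
apply/eqP; rewrite eqEsubset; apply/andP; split.
  exact: child_sub PD sC pC xC xD.
exact: child_sub PC sD pD xD xC.
Qed.

Lemma child_ex M x y : is_strong col M -> x \in M -> y \in M -> x != y ->
  exists2 C, C \in Pmax col M & x \in C.
Proof.
move=> sM xM yM nxy.
pose P := fun S : {set V} => [&& is_strong col S, S \proper M & x \in S].
have P1 : P [set x].
  rewrite /P set1_strong set11 andbT /= properE sub1set xM /=.
  by apply/subsetPn; exists y => //; rewrite inE eq_sym.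
case: (arg_maxnP (fun S : {set V} => #|S|) P1) => C /and3P[sC pC xC] Hmax.
exists C => //; rewrite inE sC pC /=; apply/forallP => B; apply/implyP => /andP[sB pCB].
apply/negP => pBM.
have xB : x \in B by apply: (subsetP (proper_sub pCB)).
have := Hmax B; rewrite /P sB pBM xB => /(_ isT).
by move=> h; have := proper_card pCB; move: h; rewrite /geq; lia.
Qed.

Lemma data_ex x y : x != y -> exists M C D, [/\ is_strong col M, C \in Pmax col M,
  D \in Pmax col M, C != D & x \in C /\ y \in D].
Proof.
move=> nxy.
have [M [sM xM yM mM]] := min_strong_ex x y.
have [C PC xC] := child_ex sM xM yM nxy.
have [D PD yD] : exists2 D, D \in Pmax col M & y \in D.
  by apply: child_ex sM yM xM _; rewrite eq_sym.
exists M, C, D; split => //.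
apply/eqP => e; subst D.
have [sC pC _] := PmaxP PC.
have e := mM C sC xC yD (proper_sub pC).
by move: pC; rewrite e properxx.
Qed.

Lemma mk_min M C D x z : is_strong col M -> C \in Pmax col M -> D \in Pmax col M ->
  C != D -> x \in C -> z \in D -> min_strong col x z M.
Proof.
move=> sM PC PD nCD xC zD.
have [_ pCM _] := PmaxP PC; have [_ pDM _] := PmaxP PD.
have xM : x \in M := subsetP (proper_sub pCM) x xC.
have zM : z \in M := subsetP (proper_sub pDM) z zD.
split => // M' sM' xM' zM' sub.
apply/eqP; apply/negPn/negP => ne.
have pM' : M' \proper M by rewrite properEneq ne sub.
have /subsetP/(_ z zM') zC := child_sub PC sM' pM' xM' xC.
by move: nCD; rewrite (child_uniq PC PD zC zD) eqxx.
Qed.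

Lemma wit_eq M C D x y M' Cu Cv : is_strong col M -> C \in Pmax col M -> D \in Pmax col M ->
  C != D -> x \in C -> y \in D ->
  min_strong col x y M' -> Cu \in Pmax col M' -> Cv \in Pmax col M' -> x \in Cu -> y \in Cv ->
  [/\ M' = M, Cu = C & Cv = D].
Proof.
move=> sM PC PD nCD xC yD m' PU PV xU yV.
have eM := min_strong_uniq m' (mk_min sM PC PD nCD xC yD).
subst M'; split => //; by apply: child_uniq; eassumption.
Qed.

Section L.
Variables (l : {set V} -> {set V} -> nat) (i : nat).

Lemma prec_iff M C D x y : is_strong col M -> C \in Pmax col M -> D \in Pmax col M ->
  C != D -> x \in C -> y \in D -> (prec col l x y <-> l M C < l M D).
Proof.
move=> sM PC PD nCD xC yD; split.
  case=> M' [Cu [Cv [m' PU PV [xU yV _] lt]]].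
  by case: (wit_eq sM PC PD nCD xC yD m' PU PV xU yV) => ???; subst.
move=> lt; exists M, C, D; split => //; first exact: mk_min sM PC PD nCD xC yD.
Qed.

Lemma pq_iff M C D x y : is_strong col M -> C \in Pmax col M -> D \in Pmax col M ->
  C != D -> x \in C -> y \in D -> (pair_qcol col x y i <-> qcol col C D i).
Proof.
move=> sM PC PD nCD xC yD; split.
  case=> M' [Cu [Cv [m' PU PV [xU yV _] lt]]].
  by case: (wit_eq sM PC PD nCD xC yD m' PU PV xU yV) => ???; subst.
move=> lt; exists M, C, D; split => //; first exact: mk_min sM PC PD nCD xC yD.
Qed.

Definition Q M A B := (l M B < l M A /\ qcol col A B i) \/ (l M A < l M B /\ ~ qcol col B A i).

Lemma Q_irr M A : ~ Q M A A.
Proof. by rewrite /Q ltnn; case=> -[]. Qed.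

Lemma sq_iff M C D x y : is_strong col M -> C \in Pmax col M -> D \in Pmax col M ->
  C != D -> x \in C -> y \in D -> (sqsub col l i x y <-> Q M C D).
Proof.
move=> sM PC PD nCD xC yD.
have nDC : D != C by rewrite eq_sym.
have e1 := prec_iff sM PC PD nCD xC yD.
have e2 := prec_iff sM PD PC nDC yD xC.
have e3 := pq_iff sM PC PD nCD xC yD.
have e4 := pq_iff sM PD PC nDC yD xC.
have nxy : x != y.
  by apply/eqP => e; subst y; move: nCD; rewrite (child_uniq PC PD xC yD) eqxx.
move: e1 e2 e3 e4 nxy; rewrite /sqsub /Q; tauto.
Qed.

Section K.
Variable k : nat.
Hypothesis Hyp : forall M : {set V}, is_strong col M -> quot_perm_graph col k M (l M).
Hypothesis Hi : 1 <= i <= k.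

Lemma Q_total M A B : is_strong col M -> A \in Pmax col M -> B \in Pmax col M -> A != B ->
  Q M A B \/ Q M B A.
Proof.
move=> sM PA PB nAB.
have [[linj _] _] := Hyp sM.
rewrite /Q; case: (ltngtP (l M A) (l M B)) => h.
- case: (classic (qcol col B A i)) => q; [right; left | left; right]; by split.
- case: (classic (qcol col A B i)) => q; [left; left | right; right]; by split.
- by move: nAB; rewrite (linj _ _ PA PB h) eqxx.
Qed.

Lemma Q_trans M A B C : is_strong col M -> A \in Pmax col M -> B \in Pmax col M ->
  C \in Pmax col M -> Q M A B -> Q M B C -> Q M A C.
Proof.
move=> sM PA PB PC.
have [[linj lrng] [pi Hpi]] := Hyp sM.
have [fperm Hcol] := Hpi i Hi.
have [frng finj] := fperm.
pose R X Y := exists p q, [/\ 1 <= p <= #|Pmax col M|, 1 <= q <= #|Pmax col M|,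
   pi i p = l M X, pi i q = l M Y & p < q].
have QR : forall X Y, X \in Pmax col M -> Y \in Pmax col M -> Q M X Y -> R X Y.
  move=> X Y PX PY [[lt q]|[lt nq]]; first by apply/(Hcol X Y PX PY lt).
  have [p rp fp] := perm_surj fperm (lrng X PX).
  have [q rq fq] := perm_surj fperm (lrng Y PY).
  exists p, q; split => //.
  case: (ltngtP p q) => // h.
  + exfalso; apply: nq; apply/(Hcol Y X PY PX lt); exists q, p; split => //.
  + by move: lt; rewrite -fp -fq h ltnn.
have RQ : forall X Z, X \in Pmax col M -> Z \in Pmax col M -> R X Z -> Q M X Z.
  move=> X Z PX PZ [p [r [rp rr fp fr pr]]].
  case: (ltngtP (l M X) (l M Z)) => h.
  - right; split => // hq.
    have [p' [r' [rp' rr' fp' fr' pr']]] := (Hcol Z X PZ PX h).1 hq.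
    have e1 : p' = r by apply: finj => //; rewrite fp' fr.
    have e2 : r' = p by apply: finj => //; rewrite fp fr'.
    subst; lia.
  - by left; split => //; apply/(Hcol X Z PX PZ h); exists p, r.
  - have e : p = r by apply: finj => //; rewrite fp fr h.
    subst; lia.
move=> /(QR _ _ PA PB) [p [q [rp rq fp fq pq]]] /(QR _ _ PB PC) [q' [r [rq' rr fq' fr qr]]].
apply: RQ => //; exists p, r; split => //.
have e : q = q' by apply: finj => //; rewrite fq fq'.
subst; lia.
Qed.

End K.
End L.
End S.

Theorem lemma4p8 (V : finType) (k : nat) (col : V -> V -> nat)
  (l : {set V} -> {set V} -> nat) :
  complete_colored col k ->
  (forall M : {set V}, is_strong col M -> quot_perm_graph col k M (l M)) ->
  forall i, 1 <= i <= k -> strict_total_order (sqsub col l i).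
Proof.
move=> _ Hyp i Hi.
split; [|split; [|split]].
- move=> x y; case: (eqVneq x y) => [->|nxy]; first by constructor 2.
  have [M [C [D [sM PC PD nCD [xC yD]]]]] := data_ex col nxy.
  have nDC : D != C by rewrite eq_sym.
  case: (Q_total i Hyp sM PC PD nCD) => h.
  + by constructor 1; apply/(sq_iff l i sM PC PD nCD xC yD).
  + by constructor 3; apply/(sq_iff l i sM PD PC nDC yD xC).
- by move=> x []; rewrite eqxx.
- move=> x y hxy hyx.
  have [M [C [D [sM PC PD nCD [xC yD]]]]] := data_ex col hxy.1.
  have nDC : D != C by rewrite eq_sym.
  have q1 := (sq_iff l i sM PC PD nCD xC yD).1 hxy.
  have q2 := (sq_iff l i sM PD PC nDC yD xC).1 hyx.
  exact: Q_irr (Q_trans Hyp Hi sM PC PD PC q1 q2).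
- move=> x y z hxy hyz.
  have [M1 [C1 [D1 [s1 PC1 PD1 n1 [xC1 yD1]]]]] := data_ex col hxy.1.
  have [M2 [C2 [D2 [s2 PC2 PD2 n2 [yC2 zD2]]]]] := data_ex col hyz.1.
  have q1 := (sq_iff l i s1 PC1 PD1 n1 xC1 yD1).1 hxy.
  have q2 := (sq_iff l i s2 PC2 PD2 n2 yC2 zD2).1 hyz.
  have [_ pD1 _] := PmaxP PD1; have [_ pC2 _] := PmaxP PC2.
  have yM1 : y \in M1 := subsetP (proper_sub pD1) y yD1.
  have yM2 : y \in M2 := subsetP (proper_sub pC2) y yC2.
  case: (eqVneq M1 M2) => [e|ne].
  + subst M2.
    have e := child_uniq PD1 PC2 yD1 yC2; subst C2.
    have q3 := Q_trans Hyp Hi s1 PC1 PD1 PD2 q1 q2.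
    have n3 : C1 != D2 by apply/eqP => e; rewrite e in q3; exact: Q_irr q3.
    exact/(sq_iff l i s1 PC1 PD2 n3 xC1 zD2).
  + case: (strong_lam s1 s2 yM1 yM2) => sub.
    * have pM : M1 \proper M2 by rewrite properEneq ne sub.
      have [_ pC1 _] := PmaxP PC1.
      have /subsetP/(_ x (subsetP (proper_sub pC1) x xC1)) xC2 :=
        child_sub PC2 s1 pM yM1 yC2.
      exact/(sq_iff l i s2 PC2 PD2 n2 xC2 zD2).
    * have pM : M2 \proper M1 by rewrite properEneq eq_sym ne sub.
      have [_ pD2 _] := PmaxP PD2.
      have /subsetP/(_ z (subsetP (proper_sub pD2) z zD2)) zD1 :=
        child_sub PD1 s2 pM yM2 yD1.
      exact/(sq_iff l i s1 PC1 PD1 n1 xC1 zD1).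
Qed.
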